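(* Let $f:\mathbb{N}\to\mathbb{R}$ with $f(1)=1$ be multiplicative, i.e. $f(mn)=f(m)f(n)$ for all coprime $m,n$. Assume there exist $C>0$ and $\gamma\in\mathbb{R}$ such that $|f(n)|\leq C n^\gamma$ for all $n\geq2$. Then $$|f^{-1}(n)| \leq \left(\frac{C}{C+1}\right)^{\omega(n)} (C+1)^{\Omega(n)} n^{\gamma}, \quad n\geq 2.$$
   Context: $f^{-1}$ denotes the Dirichlet inverse of $f$: the arithmetic function with $\sum_{d\mid n} f(n/d) f^{-1}(d)=\varepsilon(n)$ for all $n$, where $\varepsilon(1)=1$ and $\varepsilon(n)=0$ for $n\ge2$. $\omega(n)$ is the number of distinct prime factors of $n$ and $\Omega(n)$ the number of prime factors counted with multiplicity. *)

(* Defs.v *)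
From mathcomp Require Import all_boot all_order all_algebra.
From mathcomp Require Import all_classical all_reals all_analysis.
Set Implicit Arguments. Unset Strict Implicit. Unset Printing Implicit Defensive.
Import Order.TTheory GRing.Theory Num.Theory.
Local Open Scope ring_scope.

(* Arithmetic functions are modeled as f : nat -> R; only values at n >= 1 matter. *)

Definition mult_arith (R : realType) (f : nat -> R) : Prop :=
  f 1%N = 1 /\ forall m n : nat, coprime m n -> f (m * n)%N = f m * f n.

Definition dirichlet_inverse (R : realType) (f g : nat -> R) : Prop :=
  forall n : nat, (0 < n)%N ->
    \sum_(d <- divisors n) f (n %/ d)%N * g d = (n == 1%N)%:R.

Definition omega (n : nat) : nat := size (primes n).
Definition Omega (n : nat) : nat := (\sum_(p <- primes n) logn p n)%N.

(* Main.v *)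
Require Import Defs.
From mathcomp Require Import all_boot all_order all_algebra.
From mathcomp Require Import all_classical all_reals all_analysis.
From mathcomp Require Import zify ring.
Import Order.TTheory GRing.Theory Num.Theory.
Local Open Scope ring_scope.


Lemma divisorsM_perm (m n : nat) : coprime m n -> (0 < m)%N -> (0 < n)%N ->
  perm_eq (divisors (m * n)) [seq (d1 * d2)%N | d1 <- divisors m, d2 <- divisors n].
Proof.
move=> co m0 n0.
have mn0 : (0 < m * n)%N by rewrite muln_gt0 m0 n0.
apply: uniq_perm; first exact: divisors_uniq.
  apply: allpairs_uniq; [exact: divisors_uniq | exact: divisors_uniq | ].
  move=> [a1 a2] [b1 b2] /allpairsP[[x1 x2] /= [hx1 hx2 [-> ->]]].
  move=> /allpairsP[[y1 y2] /= [hy1 hy2 [-> ->]]] /= E.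
  rewrite -!dvdn_divisors // in hx1 hx2 hy1 hy2.
  have key : forall u1 u2, (u1 %| m)%N -> (u2 %| n)%N -> gcdn (u1 * u2) m = u1 /\ gcdn (u1 * u2) n = u2.
    move=> u1 u2 h1 h2; split.
      rewrite gcdnC Gauss_gcdl; first exact/gcdn_idPr.
      by rewrite coprime_sym; apply: (coprime_dvdl h2); rewrite coprime_sym.
    rewrite gcdnC Gauss_gcdr; first exact/gcdn_idPr.
    by rewrite coprime_sym; apply: (coprime_dvdl h1).
  have [k1 k2] := key _ _ hx1 hx2; have [l1 l2] := key _ _ hy1 hy2.
  by congr pair; [rewrite -k1 -l1 E | rewrite -k2 -l2 E].
move=> d; rewrite -dvdn_divisors //; apply/idP/allpairsP.
  move=> dd; exists (gcdn d m, gcdn d n) => /=.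
  rewrite -!dvdn_divisors // !dvdn_gcdr; split => //.
  apply/eqP; rewrite eqn_dvd; apply/andP; split.
    have h1 : (d %| gcdn d m * n)%N.
      by rewrite muln_gcdl dvdn_gcd dvdn_mulr.
    have h2 : (d %| gcdn d m * gcdn d n)%N.
      by rewrite muln_gcdr dvdn_gcd h1 dvdn_mull.
    exact: h2.
  rewrite Gauss_dvd ?dvdn_gcdl //.
  apply: (coprime_dvdl (dvdn_gcdr _ _)); apply: (coprime_dvdr (dvdn_gcdr _ _)) => //.
move=> [[x1 x2] /= [hx1 hx2 ->]].
rewrite -!dvdn_divisors // in hx1 hx2.
exact: dvdn_mul.
Qed.




Lemma sum_ind_div (R : realType) (m : nat) : (0 < m)%N ->
  \sum_(d <- divisors m) ((d == m)%:R : R) = 1.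
Proof.
move=> m0; rewrite (bigD1_seq m) ?divisors_id ?divisors_uniq //= eqxx.
by rewrite big1 ?addr0 // => i /negPf ->.
Qed.

Lemma ginv1 (R : realType) (f g : nat -> R) : mult_arith f -> dirichlet_inverse f g ->
  g 1%N = 1.
Proof.
move=> [f1 _] dg.
by have := dg 1%N isT; rewrite (_ : divisors 1 = [:: 1%N]) // big_seq1 divn1 f1 mul1r.
Qed.

Lemma ginv_mult (R : realType) (f g : nat -> R) : mult_arith f -> dirichlet_inverse f g ->
  forall m n, coprime m n -> (0 < m)%N -> (0 < n)%N -> g (m * n)%N = g m * g n.
Proof.
move=> fm dg; have g1 := @ginv1 R f g fm dg; case: fm => f1 fM.
suff H : forall N m n, (m * n < N)%N -> coprime m n -> (0 < m)%N -> (0 < n)%N ->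
    g (m * n)%N = g m * g n.
  by move=> m n; apply: (H (m * n).+1).
elim=> [//|N IH] m n lt co m0 n0.
have [m1|h] := ltnP 1 m; last first.
  have hm : m = 1%N by lia.
  by rewrite hm mul1n g1 mul1r.
have [n1|h] := ltnP 1 n; last first.
  have hn : n = 1%N by lia.
  by rewrite hn muln1 g1 mulr1.
have mn0 : (0 < m * n)%N by rewrite muln_gt0 m0 n0.
have E := dg (m * n)%N mn0.
rewrite (perm_big _ (divisorsM_perm m n co m0 n0)) big_allpairs_dep /= in E.
set c := g (m * n)%N - g m * g n.
have T : forall d1 d2, d1 \in divisors m -> d2 \in divisors n ->
    f ((m * n) %/ (d1 * d2))%N * g (d1 * d2)%N =
    f (m %/ d1)%N * g d1 * (f (n %/ d2)%N * g d2) + ((d1 == m)%:R * c) * (d2 == n)%:R.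
  move=> d1 d2; rewrite -!dvdn_divisors // => h1 h2.
  have d10 : (0 < d1)%N by apply: dvdn_gt0 h1.
  have d20 : (0 < d2)%N by apply: dvdn_gt0 h2.
  case/dvdnP: (h1) => a1 ea1; case/dvdnP: (h2) => a2 ea2.
  have q1 : (m %/ d1 = a1)%N by rewrite ea1 mulnK.
  have q2 : (n %/ d2 = a2)%N by rewrite ea2 mulnK.
  have q : ((m * n) %/ (d1 * d2) = a1 * a2)%N.
    by rewrite ea1 ea2 mulnACA mulnK // muln_gt0 d10 d20.
  have [/andP[/eqP e1 /eqP e2]|hne] := boolP ((d1 == m) && (d2 == n)).
    rewrite e1 e2 !divnn m0 n0 mn0 f1 !eqxx !mul1r !mulr1; rewrite /c; ring.
  have le1 := dvdn_leq m0 h1; have le2 := dvdn_leq n0 h2.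
  have lt2 : (d1 * d2 < m * n)%N.
    case: (eqVneq d1 m) hne => [e1|ne1] /=.
      move=> ne2; rewrite e1 ltn_pmul2l //; lia.
    move=> _; apply: (@leq_ltn_trans (d1 * n)); first by rewrite leq_pmul2l.
    rewrite ltn_pmul2r //; lia.
  have cod : coprime d1 d2 by apply: (coprime_dvdl h1); apply: (coprime_dvdr h2).
  have coa : coprime a1 a2.
    apply: (@coprime_dvdl _ m); first by rewrite ea1 dvdn_mulr.
    apply: (@coprime_dvdr _ n) => //; by rewrite ea2 dvdn_mulr.
  rewrite q q1 q2 fM // (IH d1 d2) //; last by apply: leq_trans lt2 _; rewrite -ltnS.
  have -> : ((d1 == m)%:R * c * (d2 == n)%:R) = 0 :> R.
    by move: hne; case: (d1 == m); case: (d2 == n); rewrite ?mul0r ?mulr0.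
  by rewrite addr0; ring.
have E2 : \sum_(d1 <- divisors m) \sum_(d2 <- divisors n)
    (f (m %/ d1)%N * g d1 * (f (n %/ d2)%N * g d2) + ((d1 == m)%:R * c) * (d2 == n)%:R)
    = 0.
  have mn1 : (m * n == 1)%N = false by apply/negbTE; lia.
  transitivity (((m * n == 1)%N)%:R : R); last by rewrite mn1.
  rewrite -E.
  apply: eq_big_seq => d1 h1; apply: eq_big_seq => d2 h2; by rewrite T.
have E3 : \sum_(d1 <- divisors m) \sum_(d2 <- divisors n)
    (f (m %/ d1)%N * g d1 * (f (n %/ d2)%N * g d2) + ((d1 == m)%:R * c) * (d2 == n)%:R)
  = (\sum_(d1 <- divisors m) f (m %/ d1)%N * g d1) * (\sum_(d2 <- divisors n) f (n %/ d2)%N * g d2)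
    + (\sum_(d1 <- divisors m) (d1 == m)%:R * c) * (\sum_(d2 <- divisors n) (d2 == n)%:R).
  by rewrite !big_distrlr -big_split /=; apply: eq_bigr => d1 _; rewrite big_split.
rewrite E3 -big_distrl /= !sum_ind_div // dg // dg // in E2.
have m1' : (m == 1)%N = false by apply/negbTE; lia.
rewrite m1' mul0r add0r mul1r mulr1 in E2.
by apply/eqP; rewrite -subr_eq0 -/c E2.
Qed.




Lemma divisors_pow_perm p k : prime p ->
  perm_eq (divisors (p ^ k)) [seq (p ^ j)%N | j <- index_iota 0 k.+1].
Proof.
move=> pp; have p1 := prime_gt1 pp; have p0 := prime_gt0 pp.
apply: uniq_perm; first exact: divisors_uniq.
  by rewrite map_inj_uniq ?iota_uniq //; apply: expnI.
move=> d; rewrite -dvdn_divisors ?expn_gt0 ?p0 //.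
apply/dvdn_pfactor/mapP => // -[j].
  by move=> jk ->; exists j => //; rewrite mem_iota /=; lia.
by rewrite mem_iota => jk ->; exists j => //; lia.
Qed.

Definition cc {R : realType} (C : R) (k : nat) : R :=
  if k is k'.+1 then C * (C + 1) ^+ k' else 1.

Lemma cc_sum (R : realType) (C : R) k : \sum_(j < k.+1) cc C j = (C + 1) ^+ k.
Proof.
elim: k => [|k IH]; first by rewrite big_ord1 /= expr0.
by rewrite big_ord_recr /= IH exprS; ring.
Qed.

Lemma cc_ge0 (R : realType) (C : R) k : 0 <= C -> 0 <= cc C k.
Proof.
by move=> C0; case: k => [|k] /=; rewrite ?ler01 // mulr_ge0 // exprn_ge0 // addr_ge0.
Qed.

Lemma pp_bound (R : realType) (f g : nat -> R) (C gamma : R) :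
  mult_arith f -> dirichlet_inverse f g -> 0 < C ->
  (forall n : nat, (2 <= n)%N -> `|f n| <= C * (n%:R `^ gamma)) ->
  forall p, prime p -> forall k,
  `|g (p ^ k)%N| <= cc C k * ((p ^ k)%N%:R `^ gamma).
Proof.
move=> fm dg C0 hf p pp; have g1 := @ginv1 R f g fm dg.
have p1 := prime_gt1 pp; have p0 := prime_gt0 pp.
case: (fm) => f1 fM.
elim/ltn_ind => -[|k] IH.
  by rewrite expn0 g1 /= powR1 mul1r normr1.
have pk0 : (0 < p ^ k.+1)%N by rewrite expn_gt0 p0.
have E' := dg (p ^ k.+1)%N pk0.
rewrite (perm_big _ (divisors_pow_perm p k.+1 pp)) big_map big_nat_recr //= in E'.
rewrite divnn expn_gt0 p0 /= f1 mul1r in E'.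
have -> : g (p ^ k.+1)%N = - \sum_(0 <= j < k.+1) f (p ^ k.+1 %/ p ^ j)%N * g (p ^ j)%N.
  have h1 : (1 < p ^ k.+1)%N.
    by apply: (leq_trans p1); rewrite -{1}(expn1 p) leq_pexp2l.
  have hne : ((p ^ k.+1)%N == 1%N) = false by apply/negbTE; rewrite neq_ltn h1 orbT.
  by apply/eqP; rewrite -addr_eq0 addrC E' hne.
rewrite normrN big_mkord.
apply: le_trans (ler_norm_sum _ _ _) _.
apply: (@le_trans _ _ (\sum_(i < k.+1) C * cc C i * (p ^ k.+1)%N%:R `^ gamma)).
  apply: ler_sum => -[j jk] _ /=.
  rewrite -(expnB p0 (ltnW jk)) normrM.
  have e : (p ^ k.+1 = p ^ (k.+1 - j) * p ^ j)%N by rewrite -expnD subnK // ltnW.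
  rewrite [in X in _ <= X]e natrM powRM // mulrACA.
  apply: ler_pM => //.
  apply: hf.
    have : (p ^ 1 <= p ^ (k.+1 - j))%N by rewrite leq_pexp2l //; lia.
    by rewrite expn1; apply: leq_trans.
  exact: IH.
rewrite -big_distrl -big_distrr /= cc_sum /=.
by rewrite mulrC.
Qed.


Lemma primesM_perm {a b} : coprime a b -> (0 < a)%N -> (0 < b)%N ->
  perm_eq (primes (a * b)) (primes a ++ primes b).
Proof.
move=> co a0 b0; apply: uniq_perm; first exact: primes_uniq.
  rewrite cat_uniq !primes_uniq andbT /=; apply/hasPn => q qb; apply/negP => qa.
  rewrite !mem_primes in qa qb.
  case/and3P: qa => pq _ qa; case/and3P: qb => _ _ qb.
  have : (q %| gcdn a b)%N by rewrite dvdn_gcd qa qb.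
  by rewrite (eqP co) dvdn1 => /eqP q1; rewrite q1 in pq.
by move=> q; rewrite mem_cat primesM.
Qed.

Lemma omegaM a b : coprime a b -> (0 < a)%N -> (0 < b)%N ->
  omega (a * b) = (omega a + omega b)%N.
Proof. by move=> co a0 b0; rewrite /omega (perm_size (primesM_perm co a0 b0)) size_cat. Qed.

Lemma logn_out {q a b} : coprime a b -> (0 < a)%N -> (0 < b)%N -> q \in primes a ->
  logn q b = 0%N.
Proof.
move=> co a0 b0 qa; apply/eqP; rewrite -leqn0 leqNgt logn_gt0; apply/negP => qb.
have := primesM_perm co a0 b0; move/perm_uniq; rewrite primes_uniq => /esym.
by rewrite cat_uniq => /and3P[_ /hasPn /(_ q qb) /negP + _].
Qed.

Lemma OmegaM a b : coprime a b -> (0 < a)%N -> (0 < b)%N ->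
  Omega (a * b) = (Omega a + Omega b)%N.
Proof.
move=> co a0 b0; rewrite /Omega (perm_big _ (primesM_perm co a0 b0)) big_cat /=.
congr addn; apply: eq_big_seq => q hq; rewrite lognM //.
  by rewrite (logn_out co) ?addn0.
rewrite coprime_sym in co.
by rewrite (logn_out co) ?add0n.
Qed.

Definition TT {R : realType} (C gamma : R) (n : nat) : R :=
  (C / (C + 1)) ^+ omega n * (C + 1) ^+ Omega n * (n%:R `^ gamma).

Lemma TTM (R : realType) (C gamma : R) a b : coprime a b -> (0 < a)%N -> (0 < b)%N ->
  TT C gamma (a * b) = TT C gamma a * TT C gamma b.
Proof.
move=> co a0 b0; rewrite /TT omegaM // OmegaM // natrM powRM // !exprD.
by rewrite !mulrA; ring.
Qed.

Lemma TT1 (R : realType) (C gamma : R) : TT C gamma 1 = 1.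
Proof. by rewrite /TT /omega /Omega (_ : primes 1 = [::]) // big_nil powR1 !expr0 !mul1r. Qed.

Lemma TTpow (R : realType) (C gamma : R) p k : 0 < C -> prime p -> (0 < k)%N ->
  TT C gamma (p ^ k) = (C * (C + 1) ^+ k.-1) * ((p ^ k)%N%:R `^ gamma).
Proof.
move=> C0 pp k0; rewrite /TT /omega /Omega primesX // primes_prime // big_seq1 pfactorK //=.
case: k k0 => // k _ /=; rewrite expr1 exprS mulrA divfK //.
by rewrite gt_eqF // ltr_wpDl // ltW.
Qed.

Theorem proposition3p2 (R : realType) (f finv : nat -> R) (C gamma : R) :
  mult_arith f ->
  dirichlet_inverse f finv ->
  0 < C ->
  (forall n : nat, (2 <= n)%N -> `|f n| <= C * (n%:R `^ gamma)) ->
  forall n : nat, (2 <= n)%N ->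
    `|finv n| <= (C / (C + 1)) ^+ omega n * (C + 1) ^+ Omega n * (n%:R `^ gamma).
Proof.
move=> fm dg C0 hf.
suff H : forall n, (0 < n)%N -> `|finv n| <= TT C gamma n.
  by move=> n n2; apply: H; lia.
have g1 := @ginv1 R f finv fm dg.
elim/ltn_ind => n IH n0.
have [n1|n1] := ltnP 1 n; last first.
  have -> : n = 1%N by lia.
  by rewrite g1 TT1 normr1.
set p := pdiv n; have pp : prime p := pdiv_prime n1.
set k := logn p n.
have k0 : (0 < k)%N by rewrite logn_gt0 mem_primes pp n0 pdiv_dvd.
have [m cop en] := pfactor_coprime pp n0.
rewrite -/k in en.
have m0 : (0 < m)%N by move: n0; rewrite en muln_gt0 => /andP[].
have pk1 : (1 < p ^ k)%N.
  by apply: (leq_trans (prime_gt1 pp)); rewrite -{1}(expn1 p) leq_pexp2l // prime_gt0.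
have pk0 : (0 < p ^ k)%N by lia.
have mn : (m < n)%N by rewrite en -{1}(muln1 m) ltn_pmul2l.
have co : coprime (p ^ k) m by apply: coprimeXl.
rewrite en mulnC (@ginv_mult R f finv fm dg _ _ co pk0 m0) TTM // normrM.
apply: ler_pM => //.
  by rewrite TTpow //; have := @pp_bound R f finv C gamma fm dg C0 hf p pp k; case: (k) k0.
by apply: IH.
Qed.
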